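(* For $n\ge1$ let $X_n=(-1/n,1/n)\subseteq\mathbb R$ and let $X$ be the pro-set given by the inverse system $(X_n)_{n\ge1}$ with inclusion maps. Then $X$ carries the structure of an abelian group object in $\operatorname{Pro}(\mathbf{Set})$ with neutral element given by $0\in X_n$, inverse given levelwise by $x\mapsto-x$ on $X_n$, and addition $X\times X\to X$ given at index $n$ by $X_{2n}\times X_{2n}\to X_n$, $(x,y)\mapsto x+y$. This group object is nontrivial, but every homomorphism of group objects $G\to X$ in $\operatorname{Pro}(\mathbf{Set})$ from (the image of) a pro-group $G$ is trivial. In particular, $X$ is not isomorphic to the image of any pro-group, so the canonical functor $\operatorname{Pro}(\mathbf{Grp})\to\mathrm{Grp}(\operatorname{Pro}(\mathbf{Set}))$ is not an equivalence.
   Context: For a category $\mathcal C$, $\operatorname{Pro}(\mathcal C)$ is its pro-completion: objects are inverse systems, i.e. functors $X\colon \mathcal I_X^{op}\to\mathcal C$ with $\mathcal I_X$ a small filtered category, and $\operatorname{Hom}_{\operatorname{Pro}(\mathcal C)}(X,Y)=\varprojlim_{j\in\mathcal I_Y}\varinjlim_{i\in\mathcal I_X}\mathcal C(X_i,Y_j)$. $\mathrm{Grp}(\mathcal D)$ is the category of group objects in a category $\mathcal D$ with finite products; the canonical functor $\operatorname{Pro}(\mathbf{Grp})\to\mathrm{Grp}(\operatorname{Pro}(\mathbf{Set}))$ uses levelwise operations. *)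

(* Defs.v *)
From Stdlib Require Import Reals Lra Lia Arith ClassicalEpsilon ProofIrrelevance.
Open Scope R_scope.

Record Cat := {
  ob :> Type;
  hom : ob -> ob -> Type;
  idc : forall a, hom a a;
  comp : forall x y z, hom y z -> hom x y -> hom x z;
  comp_id_l : forall a b (f : hom a b), comp a b b (idc b) f = f;
  comp_id_r : forall a b (f : hom a b), comp a a b f (idc a) = f;
  comp_assoc : forall a b c d (h : hom c d) (g : hom b c) (f : hom a b),
      comp a c d h (comp a b c g f) = comp a b d (comp b c d h g) f }.
Arguments hom {_} _ _.
Arguments idc {_} _.
Arguments comp {_ _ _ _} _ _.

Definition filtered (I : Cat) : Prop :=
  inhabited (ob I) /\
  (forall a b : I, inhabited {c : I & (hom a c * hom b c)%type}) /\
  (forall (a b : I) (f g : hom a b),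
      inhabited {c : I & {h : hom b c | comp h f = comp h g}}).

Record FCat := { fcat :> Cat; fcat_filtered : filtered fcat }.

Record ProSet := {
  idx : FCat;
  lev : idx -> Type;
  tr : forall a b : idx, hom a b -> lev b -> lev a;
  tr_id : forall a (x : lev a), tr a a (idc a) x = x;
  tr_comp : forall a b c (g : hom b c) (f : hom a b) (x : lev c),
      tr a c (comp g f) x = tr a b f (tr b c g x) }.
Arguments tr _ {_ _} _ _.

(* Two representatives (i,f), (i',f') of the colimit colim_i Set(X_i, T)
   are identified iff they agree after restriction to some common index. *)
Definition germ_eq (X : ProSet) (T : Type) (i i' : idx X)
  (f : lev X i -> T) (f' : lev X i' -> T) : Prop :=
  exists (k : idx X) (u : hom i k) (u' : hom i' k),
    forall x : lev X k, f (tr X u x) = f' (tr X u' x).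
Arguments germ_eq _ {_ _ _} _ _.

(* Level representation of a pro-morphism: a choice, for each j, of a
   representative of the j-th component of lim_j colim_i Set(X_i, Y_j). *)
Record RawMor (X Y : ProSet) := {
  pidx : idx Y -> idx X;
  pmap : forall j, lev X (pidx j) -> lev Y j }.
Arguments pidx {_ _} _ _.
Arguments pmap {_ _} _ _ _.

(* compatibility, i.e. the family defines an element of the limit *)
Definition valid {X Y : ProSet} (f : RawMor X Y) : Prop :=
  forall (j j' : idx Y) (v : hom j j'),
    germ_eq X (fun x => tr Y v (pmap f j' x)) (pmap f j).

Definition mor_eq {X Y : ProSet} (f g : RawMor X Y) : Prop :=
  forall j, germ_eq X (pmap f j) (pmap g j).

Definition idm (X : ProSet) : RawMor X X :=
  {| pidx := fun j => j; pmap := fun j x => x |}.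

Definition compm {X Y Z : ProSet} (g : RawMor Y Z) (f : RawMor X Y) : RawMor X Z :=
  {| pidx := fun k => pidx f (pidx g k);
     pmap := fun k x => pmap g k (pmap f (pidx g k) x) |}.

Definition prodCat (I J : Cat) : Cat.
Proof.
  refine {| ob := (ob I * ob J)%type;
            hom := fun p q => (hom (fst p) (fst q) * hom (snd p) (snd q))%type;
            idc := fun p => (idc (fst p), idc (snd p));
            comp := fun p q r g f => (comp (fst g) (fst f), comp (snd g) (snd f)) |}.
  - intros a b [f1 f2]; simpl; now rewrite !comp_id_l.
  - intros a b [f1 f2]; simpl; now rewrite !comp_id_r.
  - intros a b c d [h1 h2] [g1 g2] [f1 f2]; simpl; now rewrite !comp_assoc.
Defined.

Lemma prodCat_filtered (I J : FCat) : filtered (prodCat I J).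
Proof.
  destruct (fcat_filtered I) as [[i0] [HI1 HI2]].
  destruct (fcat_filtered J) as [[j0] [HJ1 HJ2]].
  split; [|split].
  - exact (inhabits (i0, j0)).
  - intros [a1 a2] [b1 b2].
    destruct (HI1 a1 b1) as [[c1 [u1 v1]]]; destruct (HJ1 a2 b2) as [[c2 [u2 v2]]].
    exact (inhabits (existT _ ((c1, c2) : prodCat I J) ((u1, u2), (v1, v2)))).
  - intros [a1 a2] [b1 b2] [f1 f2] [g1 g2].
    destruct (HI2 _ _ f1 g1) as [[c1 [h1 e1]]]; destruct (HJ2 _ _ f2 g2) as [[c2 [h2 e2]]].
    refine (inhabits (existT _ ((c1, c2) : prodCat I J) (exist _ ((h1, h2) : @hom (prodCat I J) (b1,b2) (c1,c2)) _))).
    simpl in *; now rewrite e1, e2.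
Qed.

Definition prodFCat (I J : FCat) : FCat :=
  {| fcat := prodCat I J; fcat_filtered := prodCat_filtered I J |}.

Definition prodP (X Y : ProSet) : ProSet.
Proof.
  refine {| idx := prodFCat (idx X) (idx Y);
            lev := fun p => (lev X (fst p) * lev Y (snd p))%type;
            tr := fun p q u z => (tr X (fst u) (fst z), tr Y (snd u) (snd z)) |}.
  - intros [a b] [x y]; simpl; now rewrite !tr_id.
  - intros a b c [g1 g2] [f1 f2] [x y]; simpl; now rewrite !tr_comp.
Defined.

Definition unitCat : Cat.
Proof.
  refine {| ob := unit; hom := fun _ _ => unit; idc := fun _ => tt;
            comp := fun _ _ _ _ _ => tt |}.
  - now intros a b [].
  - now intros a b [].
  - reflexivity.
Defined.

Lemma unitCat_filtered : filtered unitCat.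
Proof.
  split; [|split].
  - exact (inhabits tt).
  - intros a b; exact (inhabits (existT _ (tt : unitCat) (tt, tt))).
  - intros a b f g; exact (inhabits (existT _ (tt : unitCat) (exist _ (tt : @hom unitCat b tt) eq_refl))).
Qed.

Definition OneP : ProSet.
Proof.
  refine {| idx := {| fcat := unitCat; fcat_filtered := unitCat_filtered |};
            lev := fun _ => unit; tr := fun _ _ _ _ => tt |}.
  - now intros a [].
  - reflexivity.
Defined.

Definition prodm {X X' Y Y' : ProSet} (f : RawMor X X') (g : RawMor Y Y')
  : RawMor (prodP X Y) (prodP X' Y') :=
  {| pidx := fun (p : idx (prodP X' Y')) => ((pidx f (fst p), pidx g (snd p)) : idx (prodP X Y));
     pmap := fun p z => (pmap f (fst p) (fst z), pmap g (snd p) (snd z)) |}.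

Definition assocm (A B C : ProSet) : RawMor (prodP (prodP A B) C) (prodP A (prodP B C)) :=
  {| pidx := fun (p : idx (prodP A (prodP B C))) =>
               (((fst p, fst (snd p)), snd (snd p)) : idx (prodP (prodP A B) C));
     pmap := fun p z => (fst (fst z), (snd (fst z), snd z)) |}.

Definition swapm (A B : ProSet) : RawMor (prodP A B) (prodP B A) :=
  {| pidx := fun (p : idx (prodP B A)) => ((snd p, fst p) : idx (prodP A B));
     pmap := fun p z => (snd z, fst z) |}.

Definition lunitinv (A : ProSet) : RawMor A (prodP OneP A) :=
  {| pidx := fun (p : idx (prodP OneP A)) => snd p; pmap := fun p x => (tt, x) |}.
Definition runitinv (A : ProSet) : RawMor A (prodP A OneP) :=
  {| pidx := fun (p : idx (prodP A OneP)) => fst p; pmap := fun p x => (x, tt) |}.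

Definition some_idx (X : ProSet) : idx X :=
  epsilon (proj1 (fcat_filtered (idx X))) (fun _ => True).
Definition ubound (X : ProSet) (a b : idx X) : {c : idx X & (hom a c * hom b c)%type} :=
  epsilon (proj1 (proj2 (fcat_filtered (idx X))) a b) (fun _ => True).

Definition bang (X : ProSet) : RawMor X OneP :=
  {| pidx := fun _ => some_idx X; pmap := fun (_ : idx OneP) _ => (tt : lev OneP tt) |}.

Definition pairm {W A B : ProSet} (f : RawMor W A) (g : RawMor W B) : RawMor W (prodP A B) :=
  {| pidx := fun (p : idx (prodP A B)) => projT1 (ubound W (pidx f (fst p)) (pidx g (snd p)));
     pmap := fun p w =>
       (pmap f (fst p) (tr W (fst (projT2 (ubound W (pidx f (fst p)) (pidx g (snd p))))) w),
        pmap g (snd p) (tr W (snd (projT2 (ubound W (pidx f (fst p)) (pidx g (snd p))))) w)) |}.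

Definition is_group_obj (Y : ProSet) (m : RawMor (prodP Y Y) Y) (e : RawMor OneP Y)
  (i : RawMor Y Y) : Prop :=
  valid m /\ valid e /\ valid i /\
  mor_eq (compm m (prodm m (idm Y))) (compm m (compm (prodm (idm Y) m) (assocm Y Y Y))) /\
  mor_eq (compm m (compm (prodm e (idm Y)) (lunitinv Y))) (idm Y) /\
  mor_eq (compm m (compm (prodm (idm Y) e) (runitinv Y))) (idm Y) /\
  mor_eq (compm m (pairm i (idm Y))) (compm e (bang Y)) /\
  mor_eq (compm m (pairm (idm Y) i)) (compm e (bang Y)).

Definition is_abgroup_obj (Y : ProSet) (m : RawMor (prodP Y Y) Y) (e : RawMor OneP Y)
  (i : RawMor Y Y) : Prop :=
  is_group_obj Y m e i /\ mor_eq (compm m (swapm Y Y)) m.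

Definition is_ghom {Y Y' : ProSet} (m : RawMor (prodP Y Y) Y) (m' : RawMor (prodP Y' Y') Y')
  (f : RawMor Y Y') : Prop :=
  mor_eq (compm m' (prodm f f)) (compm f m).

Record Grp := {
  gcar :> Type;
  gmul : gcar -> gcar -> gcar;
  gone : gcar;
  ginv : gcar -> gcar;
  gmulA : forall x y z, gmul x (gmul y z) = gmul (gmul x y) z;
  gmul1l : forall x, gmul gone x = x;
  gmul1r : forall x, gmul x gone = x;
  gmulVl : forall x, gmul (ginv x) x = gone }.

Record ProGrp := {
  gidx : FCat;
  glev : gidx -> Grp;
  gtr : forall a b : gidx, hom a b -> glev b -> glev a;
  gtr_mul : forall a b (u : hom a b) (x y : glev b),
      gtr a b u (gmul _ x y) = gmul _ (gtr a b u x) (gtr a b u y);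
  gtr_id : forall a (x : glev a), gtr a a (idc a) x = x;
  gtr_comp : forall a b c (g : hom b c) (f : hom a b) (x : glev c),
      gtr a c (comp g f) x = gtr a b f (gtr b c g x) }.

(* image of a pro-group under Pro(Grp) -> Grp(Pro(Set)), levelwise operations *)
Definition proset_of (G : ProGrp) : ProSet :=
  {| idx := gidx G; lev := fun a => gcar (glev G a); tr := gtr G;
     tr_id := gtr_id G; tr_comp := gtr_comp G |}.

Definition mulG (G : ProGrp) : RawMor (prodP (proset_of G) (proset_of G)) (proset_of G) :=
  {| pidx := fun (a : idx (proset_of G)) => ((a, a) : idx (prodP (proset_of G) (proset_of G)));
     pmap := fun a z => gmul (glev G a) (fst z) (snd z) |}.
Definition oneG (G : ProGrp) : RawMor OneP (proset_of G) :=
  {| pidx := fun _ => (tt : idx OneP); pmap := fun (a : idx (proset_of G)) _ => (gone (glev G a) : lev (proset_of G) a) |}.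
Definition invG (G : ProGrp) : RawMor (proset_of G) (proset_of G) :=
  {| pidx := fun (a : idx (proset_of G)) => a; pmap := fun (a : idx (proset_of G)) (x : lev (proset_of G) a) => (ginv (glev G a) x : lev (proset_of G) a) |}.

Definition posnat := {n : nat | (1 <= n)%nat}.

Definition NCat : Cat.
Proof.
  refine {| ob := posnat; hom := fun a b => (proj1_sig a <= proj1_sig b)%nat;
            idc := fun a => le_n _;
            comp := fun a b c g f => Nat.le_trans _ _ _ f g |}.
  - intros; apply le_unique.
  - intros; apply le_unique.
  - intros; apply le_unique.
Defined.

Lemma NCat_filtered : filtered NCat.
Proof.
  split; [|split].
  - exact (inhabits (exist _ 1%nat (le_n 1))).
  - intros [a Ha] [b Hb].
    assert (Hm : (1 <= Nat.max a b)%nat) by lia.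
    refine (inhabits (existT _ (exist _ (Nat.max a b) Hm : NCat) (_, _))); simpl; lia.
  - intros a b f g; refine (inhabits (existT _ b (exist _ (idc b) _))); apply le_unique.
Qed.

Definition Xlev (n : posnat) : Type :=
  {x : R | - (1 / INR (proj1_sig n)) < x < 1 / INR (proj1_sig n)}.

Lemma inv_le_of_le (a b : nat) : (1 <= a)%nat -> (a <= b)%nat -> 1 / INR b <= 1 / INR a.
Proof.
  intros Ha Hab. apply le_INR in Ha, Hab. simpl in Ha. unfold Rdiv; rewrite !Rmult_1_l.
  apply Rinv_le_contravar; lra.
Qed.

Lemma Xincl_pf (a b : posnat) (h : (proj1_sig a <= proj1_sig b)%nat) (x : Xlev b) :
  - (1 / INR (proj1_sig a)) < proj1_sig x < 1 / INR (proj1_sig a).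
Proof.
  destruct x as [x Hx]; simpl. pose proof (inv_le_of_le _ _ (proj2_sig a) h). lra.
Qed.

Definition Xtr (a b : posnat) (h : (proj1_sig a <= proj1_sig b)%nat) (x : Xlev b) : Xlev a :=
  exist _ (proj1_sig x) (Xincl_pf a b h x).

Definition Xpro : ProSet.
Proof.
  refine {| idx := {| fcat := NCat; fcat_filtered := NCat_filtered |};
            lev := Xlev; tr := Xtr |}.
  - intros a [x Hx]; unfold Xtr; simpl; f_equal; apply proof_irrelevance.
  - intros a b c g f [x Hx]; unfold Xtr; simpl; f_equal; apply proof_irrelevance.
Defined.

Lemma Xzero_pf (n : posnat) : - (1 / INR (proj1_sig n)) < 0 < 1 / INR (proj1_sig n).
Proof.
  pose proof (le_INR _ _ (proj2_sig n)) as H; simpl in H.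
  assert (0 < 1 / INR (proj1_sig n)) by (apply Rdiv_lt_0_compat; lra). lra.
Qed.

Definition eX : RawMor OneP Xpro :=
  {| pidx := fun _ => (tt : idx OneP);
     pmap := fun (n : idx Xpro) _ => (exist _ 0 (Xzero_pf n) : lev Xpro n) |}.

Lemma Xopp_pf (n : posnat) (x : Xlev n) :
  - (1 / INR (proj1_sig n)) < - proj1_sig x < 1 / INR (proj1_sig n).
Proof. destruct x as [x Hx]; simpl; lra. Qed.

Definition iX : RawMor Xpro Xpro :=
  {| pidx := fun n => n; pmap := fun (n : idx Xpro) x => (exist _ _ (Xopp_pf n x) : lev Xpro n) |}.

Lemma double_pos (n : posnat) : (1 <= 2 * proj1_sig n)%nat.
Proof. destruct n; simpl; lia. Qed.

Definition dbl (n : posnat) : posnat := exist _ (2 * proj1_sig n)%nat (double_pos n).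

Lemma Xadd_pf (n : posnat) (x y : Xlev (dbl n)) :
  - (1 / INR (proj1_sig n)) < proj1_sig x + proj1_sig y < 1 / INR (proj1_sig n).
Proof.
  destruct x as [x Hx]; destruct y as [y Hy]; unfold dbl in *; simpl proj1_sig in *.
  rewrite Nat.add_0_r, plus_INR in Hx, Hy.
  pose proof (le_INR _ _ (proj2_sig n)) as H; simpl in H.
  set (k := INR (proj1_sig n)) in *.
  assert (E : 1 / (k + k) = (1 / k) / 2) by (field; lra).
  rewrite E in Hx, Hy. lra.
Qed.

Definition mX : RawMor (prodP Xpro Xpro) Xpro :=
  {| pidx := fun (n : idx Xpro) => ((dbl n, dbl n) : idx (prodP Xpro Xpro));
     pmap := fun (n : idx Xpro) z => (exist _ _ (Xadd_pf n (fst z) (snd z)) : lev Xpro n) |}.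

(* Main.v *)
Require Import Defs.
From Stdlib Require Import Reals Lra Lia Arith ClassicalEpsilon ProofIrrelevance.
Open Scope R_scope.
Lemma Xeq (n : posnat) (x y : Xlev n) : proj1_sig x = proj1_sig y -> x = y.
Proof. destruct x, y; simpl; intros ->; f_equal; apply proof_irrelevance. Qed.

Lemma validmX : valid mX.
Proof.
  intros j j' v. exists ((dbl j', dbl j') : idx (prodP Xpro Xpro)).
  unshelve eexists. { simpl. split; simpl; lia. }
  unshelve eexists.
  { simpl in v |- *. split; simpl; lia. }
  intros [x y]. apply Xeq. simpl. reflexivity.
Qed.
Definition pmax (a b : posnat) : posnat :=
  exist _ (Nat.max (proj1_sig a) (proj1_sig b)) (Nat.le_trans _ _ _ (proj2_sig a) (Nat.le_max_l _ _)).

Ltac hom_tac := simpl in *; repeat split; simpl in *; try unfold pmax; simpl; lia.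

Lemma validiX : valid iX.
Proof.
  intros j j' v. exists j'. unshelve eexists. hom_tac. unshelve eexists. hom_tac.
  intros x. apply Xeq. reflexivity.
Qed.

Lemma valideX : valid eX.
Proof.
  intros j j' v. exists tt. exists tt. exists tt. intros x. apply Xeq. reflexivity.
Qed.

Lemma assocX : mor_eq (compm mX (prodm mX (idm Xpro))) (compm mX (compm (prodm (idm Xpro) mX) (assocm Xpro Xpro Xpro))).
Proof.
  intros n. exists (((dbl (dbl n), dbl (dbl n)), dbl (dbl n)) : idx (prodP (prodP Xpro Xpro) Xpro)).
  unshelve eexists. hom_tac. unshelve eexists. hom_tac.
  intros [[x y] z]. apply Xeq. simpl. ring.
Qed.

Lemma lunitX : mor_eq (compm mX (compm (prodm eX (idm Xpro)) (lunitinv Xpro))) (idm Xpro).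
Proof.
  intros n. exists (dbl n). unshelve eexists. hom_tac. unshelve eexists. hom_tac.
  intros x. apply Xeq. simpl. ring.
Qed.

Lemma runitX : mor_eq (compm mX (compm (prodm (idm Xpro) eX) (runitinv Xpro))) (idm Xpro).
Proof.
  intros n. exists (dbl n). unshelve eexists. hom_tac. unshelve eexists. hom_tac.
  intros x. apply Xeq. simpl. ring.
Qed.

Lemma linvX : mor_eq (compm mX (pairm iX (idm Xpro))) (compm eX (bang Xpro)).
Proof.
  intros n. simpl.
  exists (pmax (projT1 (ubound Xpro (dbl n) (dbl n))) (some_idx Xpro)).
  unshelve eexists. hom_tac. unshelve eexists. hom_tac.
  intros x. apply Xeq. simpl. ring.
Qed.

Lemma rinvX : mor_eq (compm mX (pairm (idm Xpro) iX)) (compm eX (bang Xpro)).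
Proof.
  intros n. simpl.
  exists (pmax (projT1 (ubound Xpro (dbl n) (dbl n))) (some_idx Xpro)).
  unshelve eexists. hom_tac. unshelve eexists. hom_tac.
  intros x. apply Xeq. simpl. ring.
Qed.

Lemma commX : mor_eq (compm mX (swapm Xpro Xpro)) mX.
Proof.
  intros n. exists ((dbl n, dbl n) : idx (prodP Xpro Xpro)).
  unshelve eexists. hom_tac. unshelve eexists. hom_tac.
  intros [x y]. apply Xeq. simpl. ring.
Qed.

Lemma part1 : is_abgroup_obj Xpro mX eX iX.
Proof.
  repeat split; auto using validmX, validiX, valideX, assocX, lunitX, runitX, linvX, rinvX, commX.
Qed.
Lemma half_pf (n : posnat) : - (1 / INR (proj1_sig n)) < 1 / (2 * INR (proj1_sig n)) < 1 / INR (proj1_sig n).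
Proof.
  pose proof (le_INR _ _ (proj2_sig n)) as H; simpl in H.
  set (k := INR (proj1_sig n)) in *.
  assert (0 < 1 / k) by (apply Rdiv_lt_0_compat; lra).
  assert (E : 1 / (2 * k) = (1 / k) / 2) by (field; lra). rewrite E. lra.
Qed.
Definition halfX (n : posnat) : Xlev n := exist _ _ (half_pf n).
Lemma half_nz (n : posnat) : proj1_sig (halfX n) <> 0.
Proof.
  simpl. pose proof (le_INR _ _ (proj2_sig n)) as H; simpl in H.
  assert (0 < 1 / (2 * INR (proj1_sig n))) by (apply Rdiv_lt_0_compat; lra). lra.
Qed.

Lemma part2 : ~ mor_eq (idm Xpro) (compm eX (bang Xpro)).
Proof.
  intros H. destruct (H (exist _ 1%nat (le_n 1))) as [k [u [u' Hk]]].
  specialize (Hk (halfX k)). apply (f_equal (@proj1_sig _ _)) in Hk.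
  simpl in Hk. apply (half_nz k). exact Hk.
Qed.
Fixpoint pw (Gr : Grp) (x : Gr) (m : nat) : Gr :=
  match m with O => x | S m' => gmul Gr (pw Gr x m') x end.

Lemma bounded_zero (Gr : Grp) (phi : Gr -> R) (B : R) :
  (forall x y, phi (gmul Gr x y) = phi x + phi y) -> (forall x, Rabs (phi x) < B) ->
  forall x, phi x = 0.
Proof.
  intros Hm Hb x.
  assert (Hp : forall m, phi (pw Gr x m) = INR (S m) * phi x).
  { induction m as [|m IH]. simpl. ring. simpl pw. rewrite Hm, IH.
    rewrite (S_INR (S m)). ring. }
  destruct (Req_dec (phi x) 0) as [E|E]; auto. exfalso.
  assert (Ha : Rabs (phi x) > 0) by (apply Rabs_pos_lt; auto).
  destruct (INR_archimed (Rabs (phi x)) B Ha) as [m Hmm].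
  specialize (Hb (pw Gr x m)). rewrite Hp, Rabs_mult, (Rabs_right (INR (S m))) in Hb.
  2: { apply Rle_ge, pos_INR. }
  rewrite S_INR in Hb. lra.
Qed.
Lemma ubG (G : ProGrp) (a b : gidx G) : exists (c : gidx G) (p : hom a c) (q : hom b c), True.
Proof.
  destruct (fcat_filtered (gidx G)) as [_ [H _]]. destruct (H a b) as [[c [p q]]].
  exists c, p, q; auto.
Qed.

Lemma coeqG (G : ProGrp) (a b : gidx G) (f g : hom a b) :
  exists (c : gidx G) (h : hom b c), forall x : glev G c, gtr G a b f (gtr G b c h x) = gtr G a b g (gtr G b c h x).
Proof.
  destruct (fcat_filtered (gidx G)) as [_ [_ H]]. destruct (H a b f g) as [[c [h e]]].
  exists c, h. intros x. rewrite <- !gtr_comp, e. reflexivity.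
Qed.
Lemma part3 (G : ProGrp) (f : RawMor (proset_of G) Xpro) :
  valid f -> is_ghom (mulG G) mX f -> mor_eq f (compm eX (bang (proset_of G))).
Proof.
  intros Hv Hh n.
  destruct (Hh n) as [[k1 k2] [[u1 u2] [[u1' u2'] H]]].
  assert (v : @hom (idx Xpro) n (dbl n)) by (simpl; lia).
  destruct (Hv n (dbl n) v) as [c [w [w' Hw]]].
  simpl in *.
  set (a := pidx f n) in *. set (b := pidx f (dbl n)) in *.
  set (Fn := fun x : glev G a => proj1_sig (pmap f n x)).
  set (F2 := fun x : glev G b => proj1_sig (pmap f (dbl n) x)).
  assert (H' : forall y z, F2 (gtr G b k1 u1 y) + F2 (gtr G b k2 u2 z) =
                          Fn (gmul _ (gtr G a k1 u1' y) (gtr G a k2 u2' z))).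
  { intros y z. specialize (H (y, z)). apply (f_equal (@proj1_sig _ _)) in H. exact H. }
  assert (Hw' : forall x, F2 (gtr G b c w x) = Fn (gtr G a c w' x)).
  { intros x. specialize (Hw x). apply (f_equal (@proj1_sig _ _)) in Hw. exact Hw. }
  clear H Hw.
  destruct (ubG G k1 k2) as [K0 [p1 [p2 _]]].
  destruct (ubG G K0 c) as [K1 [r [q _]]].
  destruct (coeqG G a K1 (Defs.comp (Defs.comp r p1) u1') (Defs.comp (Defs.comp r p2) u2')) as [K2 [h1 E1]].
  destruct (coeqG G a K2 (Defs.comp h1 (Defs.comp (Defs.comp r p1) u1')) (Defs.comp h1 (Defs.comp q w'))) as [K3 [h2 E2]].
  destruct (coeqG G b K3 (Defs.comp h2 (Defs.comp h1 (Defs.comp (Defs.comp r p1) u1))) (Defs.comp h2 (Defs.comp h1 (Defs.comp (Defs.comp r p2) u2)))) as [K4 [h3 E3]].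
  destruct (coeqG G b K4 (Defs.comp h3 (Defs.comp h2 (Defs.comp h1 (Defs.comp (Defs.comp r p1) u1)))) (Defs.comp h3 (Defs.comp h2 (Defs.comp h1 (Defs.comp q w))))) as [K5 [h4 E4]].
  set (tau := fun y : glev G K5 => gtr G _ _ h1 (gtr G _ _ h2 (gtr G _ _ h3 (gtr G _ _ h4 y)))).
  set (phi := fun y : glev G K5 => Fn (gtr G _ _ u1' (gtr G _ _ p1 (gtr G _ _ r (tau y))))).
  assert (Ha1 : forall y, gtr G _ _ u1' (gtr G _ _ p1 (gtr G _ _ r (tau y))) =
                          gtr G _ _ u2' (gtr G _ _ p2 (gtr G _ _ r (tau y)))).
  { intros y. pose proof (E1 (gtr G _ _ h2 (gtr G _ _ h3 (gtr G _ _ h4 y)))) as e. rewrite !gtr_comp in e. exact e. }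
  assert (Ha2 : forall y, gtr G _ _ u1' (gtr G _ _ p1 (gtr G _ _ r (tau y))) =
                          gtr G _ _ w' (gtr G _ _ q (tau y))).
  { intros y. pose proof (E2 (gtr G _ _ h3 (gtr G _ _ h4 y))) as e. rewrite !gtr_comp in e. exact e. }
  assert (Hb1 : forall y, gtr G _ _ u1 (gtr G _ _ p1 (gtr G _ _ r (tau y))) =
                          gtr G _ _ u2 (gtr G _ _ p2 (gtr G _ _ r (tau y)))).
  { intros y. pose proof (E3 (gtr G _ _ h4 y)) as e. rewrite !gtr_comp in e. exact e. }
  assert (Hb2 : forall y, gtr G _ _ u1 (gtr G _ _ p1 (gtr G _ _ r (tau y))) =
                          gtr G _ _ w (gtr G _ _ q (tau y))).
  { intros y. pose proof (E4 y) as e. rewrite !gtr_comp in e. exact e. }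
  clear E1 E2 E3 E4.
  assert (Hphi : forall y, phi y = F2 (gtr G _ _ u1 (gtr G _ _ p1 (gtr G _ _ r (tau y))))).
  { intros y. unfold phi. rewrite Hb2, Hw', Ha2. reflexivity. }
  assert (Hmul : forall y z, phi (gmul _ y z) = phi y + phi z).
  { intros y z. unfold phi at 1. unfold tau. rewrite !gtr_mul. fold (tau y) (tau z).
    rewrite (Ha1 z), <- H', <- (Hb1 z), <- !Hphi. reflexivity. }
  assert (Hbd : forall y, Rabs (phi y) < 1 / INR (proj1_sig n)).
  { intros y. unfold phi, Fn. match goal with |- Rabs (proj1_sig ?e) < _ => destruct e as [t Ht] end.
    simpl. apply Rabs_def1; lra. }
  pose proof (bounded_zero _ phi _ Hmul Hbd) as H0.
  destruct (ubG G K5 (some_idx (proset_of G))) as [K6 [t [t' _]]].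
  exists K6, (Defs.comp t (Defs.comp h4 (Defs.comp h3 (Defs.comp h2 (Defs.comp h1 (Defs.comp (Defs.comp r p1) u1')))))), t'.
  intros x. apply Xeq. simpl. rewrite !gtr_comp. apply (H0 (gtr G _ _ t x)).
Qed.
Lemma part4 (G : ProGrp) :
  ~ exists (f : RawMor (proset_of G) Xpro) (g : RawMor Xpro (proset_of G)),
      valid f /\ valid g /\ is_ghom (mulG G) mX f /\
      mor_eq (compm g f) (idm (proset_of G)) /\ mor_eq (compm f g) (idm Xpro).
Proof.
  intros [f [g [Hf [Hg [Hh [_ Hfg]]]]]].
  pose proof (part3 G f Hf Hh) as H0.
  set (one := exist (fun n => (1 <= n)%nat) 1%nat (le_n 1)).
  destruct (H0 one) as [K2 [v [v' Hv]]].
  destruct (Hg _ _ v) as [c [w [w' Hw]]].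
  destruct (Hfg one) as [k [u [u' Hu]]].
  simpl in *.
  set (M := pmax k c).
  assert (hk : (proj1_sig k <= proj1_sig M)%nat) by (unfold M, pmax; simpl; lia).
  assert (hc : (proj1_sig c <= proj1_sig M)%nat) by (unfold M, pmax; simpl; lia).
  set (x1 := Xtr k M hk (halfX M)). set (x2 := Xtr c M hc (halfX M)).
  assert (E : Xtr _ _ u x1 = Xtr _ _ w' x2) by (apply Xeq; reflexivity).
  specialize (Hu x1). rewrite E, <- Hw, Hv in Hu.
  apply (f_equal (@proj1_sig _ _)) in Hu. simpl in Hu. apply (half_nz M). simpl. lra.
Qed.
Theorem mainTheorem15 :
  (* X, with levelwise 0, levelwise negation and addition X_{2n} x X_{2n} -> X_n,
     is an abelian group object in Pro(Set) *)
  is_abgroup_obj Xpro mX eX iX /\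
  (* it is nontrivial: id_X differs from the constant morphism X -> 1 -> X *)
  ~ mor_eq (idm Xpro) (compm eX (bang Xpro)) /\
  (* every group-object homomorphism from (the image of) a pro-group is trivial *)
  (forall (G : ProGrp) (f : RawMor (proset_of G) Xpro),
      valid f -> is_ghom (mulG G) mX f ->
      mor_eq f (compm eX (bang (proset_of G)))) /\
  (* hence X is not isomorphic (as a group object) to the image of any pro-group,
     so Pro(Grp) -> Grp(Pro(Set)) is not essentially surjective *)
  (forall G : ProGrp,
      ~ exists (f : RawMor (proset_of G) Xpro) (g : RawMor Xpro (proset_of G)),
          valid f /\ valid g /\ is_ghom (mulG G) mX f /\
          mor_eq (compm g f) (idm (proset_of G)) /\ mor_eq (compm f g) (idm Xpro)).
Proof.
  split; [exact part1|split; [exact part2|split; [exact part3|exact part4]]].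
Qed.
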